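(* For every $\varepsilon>0$ there exist a binary sequence $\boldsymbol{a}=(a_n)_{n=1}^\infty\in\{0,1\}^{\mathbb{N}}$ and a sequence $(N_m)_{m=1}^\infty$ of natural numbers such that: (i) $\liminf_{n\to\infty}\frac{1}{n}\sum_{j=1}^n a_j\geq 1-\varepsilon$; and (ii) for all $m\in\mathbb{N}$ and $j\in\mathbb{N}$, the finite sequence $(a_j,a_{j+1},\ldots,a_{j+N_m-1})$ contains $m$ consecutive zeros. *)

(* Defs.v *)
From Stdlib Require Import Reals.
From Coquelicot Require Import Coquelicot.
Open Scope R_scope.

(* 1-indexed binary sequence a : nat -> bool; only a 1, a 2, ... matter. *)
Definition b2R (b : bool) : R := if b then 1 else 0.

(* (1/n) * sum_{j=1}^n a_j, for n >= 1 (value at n = 0 is irrelevant to liminf). *)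
Definition avg (a : nat -> bool) (n : nat) : R :=
  sum_n_m (fun j => b2R (a j)) 1 n / INR n.

Definition has_zero_run (a : nat -> bool) (j N m : nat) : Prop :=
  exists k, (j <= k)%nat /\ (k + m <= j + N)%nat /\
    forall i, (k <= i < k + m)%nat -> a i = false.

(* Main.v *)
Require Import Defs.
From Stdlib Require Import Reals.
From Coquelicot Require Import Coquelicot.
From Stdlib Require Import Arith Lia Bool Lra ZArith.
Open Scope nat_scope.


Fixpoint L (K m : nat) : nat :=
  match m with O => 1 | S p => (K * L K p + 2) * L K p end.

Fixpoint w (K m : nat) (i : nat) : bool :=
  match m with
  | O => true
  | S p => if Nat.ltb (i / L K p) (K * L K p + 1) then w K p (i mod L K p) else false
  end.

Fixpoint cnt (f : nat -> bool) (n : nat) : nat :=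
  match n with O => O | S p => cnt f p + (if f p then 1 else 0) end.

Lemma L_pos (K : nat) m : 1 <= L K m.
Proof. induction m; simpl; nia. Qed.

Lemma L_gt (K : nat) m : m < L K m.
Proof. induction m; simpl; [lia|]. pose proof (L_pos K m). nia. Qed.

Lemma divmod_eq q r l : r < l -> (q * l + r) / l = q /\ (q * l + r) mod l = r.
Proof.
  intros H. split.
  - symmetry. apply (Nat.div_unique _ _ _ r); lia.
  - symmetry. apply (Nat.mod_unique _ _ q r); lia.
Qed.

Lemma w_S_in (K : nat) p q r : q < K * L K p + 1 -> r < L K p -> w K (S p) (q * L K p + r) = w K p r.
Proof.
  intros Hq Hr. simpl. destruct (divmod_eq q r (L K p) Hr) as [E1 E2].
  rewrite E1, E2. apply Nat.ltb_lt in Hq. now rewrite Hq.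
Qed.

Lemma w_S_out (K : nat) p i : (K * L K p + 1) * L K p <= i -> w K (S p) i = false.
Proof.
  intros H. simpl. pose proof (L_pos K p).
  assert (K * L K p + 1 <= i / L K p).
  { apply Nat.div_le_lower_bound; lia. }
  destruct (Nat.ltb_spec (i / L K p) (K * L K p + 1)); [lia|auto].
Qed.

Lemma w_S_low (K : nat) p i : i < L K p -> w K (S p) i = w K p i.
Proof.
  intros H. rewrite <- (w_S_in K p 0 i); try lia. f_equal.
Qed.

Lemma w_mono (K : nat) p d i : i < L K p -> w K (d + p) i = w K p i.
Proof.
  intros H. induction d; simpl Nat.add; auto.
  rewrite w_S_low; auto.
  clear IHd. induction d; simpl Nat.add; auto. simpl. pose proof (L_pos K (d+p)). nia.
Qed.

Lemma cnt_S f n : cnt f (S n) = cnt f n + (if f n then 1 else 0).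
Proof. reflexivity. Qed.

Lemma cnt_ext f g n : (forall i, i < n -> f i = g i) -> cnt f n = cnt g n.
Proof.
  induction n; simpl; auto. intros H. rewrite IHn by (intros; apply H; lia).
  rewrite H by lia. auto.
Qed.

Lemma cnt_le f n : cnt f n <= n.
Proof. induction n; simpl; [lia|]. destruct (f n); lia. Qed.

Lemma cnt_block (K : nat) p q r : q < K * L K p + 1 -> r <= L K p ->
  cnt (w K (S p)) (q * L K p + r) = q * cnt (w K p) (L K p) + cnt (w K p) r.
Proof.
  revert r. induction q; intros r.
  - intros _ Hr. simpl. induction r; simpl; auto.
    rewrite IHr by lia.
    rewrite <- (w_S_in K p 0 r) by lia. simpl. auto.
  - intros Hq Hr. induction r.
    + replace (S q * L K p + 0) with (q * L K p + L K p) by lia.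
      pose proof (IHq (L K p) ltac:(lia) ltac:(lia)) as E. rewrite E. simpl cnt. lia.
    + replace (S q * L K p + S r) with (S (S q * L K p + r)) by lia.
      rewrite cnt_S, IHr by lia. rewrite w_S_in by lia. rewrite (cnt_S (w K p) r). lia.
Qed.

Lemma cnt_after (K : nat) p d : cnt (w K (S p)) ((K * L K p + 1) * L K p + d) = (K * L K p + 1) * cnt (w K p) (L K p).
Proof.
  induction d.
  - pose proof (L_pos K p).
    replace ((K * L K p + 1) * L K p + 0) with ((K * L K p) * L K p + L K p) by lia.
    rewrite cnt_block by lia. lia.
  - replace ((K * L K p + 1) * L K p + S d) with (S ((K * L K p + 1) * L K p + d)) by lia.
    rewrite cnt_S, IHd. rewrite w_S_out by lia. lia.
Qed.

Lemma inv (K : nat) m : (forall n, n <= L K m -> K * n <= (K+1) * cnt (w K m) n) /\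
              K * L K m + 1 <= (K+1) * cnt (w K m) (L K m).
Proof.
  induction m.
  - simpl. split.
    + intros n Hn. destruct n as [|[|]]; simpl; lia.
    + lia.
  - destruct IHm as [I1 I2]. set (A := K * L K m + 1). pose proof (L_pos K m).
    set (O := cnt (w K m) (L K m)) in *.
    assert (HA : cnt (w K (S m)) (L K (S m)) = A * O).
    { replace (L K (S m)) with (A * L K m + L K m) by (simpl; unfold A; lia).
      apply cnt_after. }
    split.
    + intros n Hn.
      destruct (Nat.lt_ge_cases n (A * L K m)) as [Hlt|Hge].
      * pose proof (Nat.div_mod n (L K m) ltac:(lia)).
        pose proof (Nat.mod_upper_bound n (L K m) ltac:(lia)).
        set (q := n / L K m) in *. set (r := n mod L K m) in *.
        assert (q < A).
        { destruct (Nat.lt_ge_cases q A); auto. nia. }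
        replace n with (q * L K m + r) by lia.
        rewrite cnt_block by (unfold A in *; lia).
        pose proof (I1 r ltac:(lia)). fold O.
        assert (K * L K m <= (K+1) * O) by lia. nia.
      * replace n with (A * L K m + (n - A * L K m)) by lia.
        rewrite cnt_after. fold O. simpl in Hn. fold A in Hn.
        assert (n <= A * L K m + L K m) by (unfold A in *; nia). fold A. nia.
    + rewrite HA. simpl. fold A. unfold A in *. nia.
Qed.

Definition a (K i : nat) : bool := w K i i.

Lemma a_w (K : nat) M i : i < L K M -> a K i = w K M i.
Proof.
  intros H. unfold a. destruct (Nat.le_ge_cases i M).
  - replace M with ((M - i) + i) by lia. symmetry. apply w_mono. apply L_gt.
  - replace i with ((i - M) + M) at 1 by lia. apply w_mono. auto.
Qed.

Lemma a_cnt (K : nat) n : K * n <= (K+1) * cnt (a K) n.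
Proof.
  rewrite (cnt_ext (a K) (w K n)).
  - apply (proj1 (inv K n)). pose proof (L_gt K n). lia.
  - intros i Hi. apply a_w. pose proof (L_gt K n). lia.
Qed.

Lemma a0 (K : nat) : a K 0 = true.
Proof. reflexivity. Qed.

Open Scope nat_scope.

Lemma divmod_eq' q r l : r < l -> (q * l + r) / l = q /\ (q * l + r) mod l = r.
Proof. apply divmod_eq. Qed.

Lemma L_div K m d : exists c, L K (d + m) = c * L K m /\ 1 <= c.
Proof.
  induction d.
  - exists 1. simpl. lia.
  - destruct IHd as [c [Hc H1]]. exists ((K * L K (d + m) + 2) * c). split.
    + simpl. rewrite Hc. lia.
    + nia.
Qed.

Lemma blk K m' d : exists blk : nat -> bool, forall i,
  w K (d + S m') i = blk (i / L K (S m')) && w K (S m') (i mod L K (S m')).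
Proof.
  set (m := S m'). pose proof (L_pos K m) as Hl. set (l := L K m) in *.
  induction d.
  - exists (fun b => Nat.eqb b 0). intros i. simpl Nat.add.
    destruct (Nat.lt_ge_cases i l).
    + rewrite Nat.div_small, Nat.mod_small by auto. reflexivity.
    + assert (1 <= i / l) by (apply Nat.div_le_lower_bound; lia).
      destruct (Nat.eqb_spec (i / l) 0); [lia|]. simpl.
      unfold m. apply w_S_out. unfold l, m in *. simpl in *. lia.
  - destruct IHd as [bk Hb]. destruct (L_div K m d) as [c [Hc H1]].
    set (A := K * L K (d + m) + 1).
    exists (fun b => Nat.ltb (b / c) A && bk (b mod c)).
    intros i. change (S d + m) with (S (d + m)).
    change (w K (S (d + m)) i) with
      (if Nat.ltb (i / L K (d + m)) (K * L K (d + m) + 1) then w K (d + m) (i mod L K (d + m)) else false).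
    fold A. rewrite Hc. fold l.
    rewrite (Nat.mul_comm c l), <- Nat.Div0.div_div, Nat.Div0.mod_mul_r.
    pose proof (Nat.mod_upper_bound i l ltac:(lia)).
    rewrite Hb.
    replace (i mod l + l * ((i / l) mod c)) with (((i / l) mod c) * l + i mod l) by lia.
    destruct (divmod_eq' ((i / l) mod c) (i mod l) l ltac:(lia)) as [E1 E2].
    rewrite E1, E2. destruct (Nat.ltb (i / l / c) A); reflexivity.
Qed.

Lemma window K m j : 1 <= m -> exists k, j <= k /\ k + m <= j + 2 * L K m /\
  forall i, k <= i < k + m -> a K i = false.
Proof.
  intros Hm. destruct m as [|m']; [lia|].
  set (m := S m'). pose proof (L_pos K m) as Hl. set (l := L K m) in *.
  set (b := j / l + 1).
  pose proof (Nat.div_mod j l ltac:(lia)).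
  pose proof (Nat.mod_upper_bound j l ltac:(lia)).
  assert (Hj1 : j < b * l) by (unfold b; nia).
  assert (Hj2 : b * l <= j + l) by (unfold b; nia).
  set (d := (b + 1) * l).
  destruct (blk K m' d) as [bk Hb]. fold m l in Hb.
  assert (Ha : forall r, r < l -> a K (b * l + r) = bk b && w K m r).
  { intros r Hr. rewrite (a_w K (d + m)).
    - rewrite Hb. destruct (divmod_eq' b r l Hr) as [E1 E2]. rewrite E1, E2. auto.
    - pose proof (L_gt K (d + m)). unfold d in *. nia. }
  pose proof (L_gt K m').
  assert (Hl' : l = (K * L K m' + 2) * L K m') by reflexivity.
  destruct (bk b) eqn:Eb.
  - exists (b * l + (K * L K m' + 1) * L K m'). split; [lia|]. split.
    + unfold m in *. nia.
    + intros i Hi. replace i with (b * l + (i - b * l)) by lia.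
      rewrite Ha by (unfold m in *; nia). simpl. unfold m. apply w_S_out. lia.
  - exists (b * l). split; [lia|]. split.
    + unfold m in *. nia.
    + intros i Hi. replace i with (b * l + (i - b * l)) by lia.
      rewrite Ha by (unfold m in *; nia). reflexivity.
Qed.
Open Scope R_scope.

Lemma sum0 K n : sum_n_m (fun j => b2R (a K j)) 0 n = INR (cnt (a K) (S n)).
Proof.
  induction n.
  - rewrite sum_n_n. simpl. lra.
  - rewrite sum_n_Sm by lia. rewrite IHn. rewrite (cnt_S (a K) (S n)).
    rewrite plus_INR. unfold b2R. destruct (a K (S n)); simpl; reflexivity.
Qed.

Lemma sum1 K n : (1 <= n)%nat -> sum_n_m (fun j => b2R (a K j)) 1 n = INR (cnt (a K) (S n)) - 1.
Proof.
  intros H. rewrite <- sum0. rewrite (sum_Sn_m _ 0 n); [|lia].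
  assert (P : forall x y : R, plus x y = x + y) by reflexivity.
  rewrite P. rewrite a0. change (b2R true) with 1. lra.
Qed.

Lemma avg_bound K eps n : 0 < eps -> 2 <= eps * INR (K + 1) -> (1 <= n)%nat ->
  1 - eps <= avg (a K) n.
Proof.
  intros He HK Hn. unfold avg. rewrite sum1 by auto.
  pose proof (a_cnt K (S n)) as C.
  apply le_INR in C. rewrite !mult_INR in C.
  set (c := INR (cnt (a K) (S n))) in *.
  rewrite S_INR in C. rewrite plus_INR in *. simpl INR in *.
  assert (Hn' : 1 <= INR n) by (apply (le_INR 1 n) in Hn; simpl in Hn; lra).
  assert (HK0 : 0 <= INR K) by apply pos_INR.
  apply (Rmult_le_reg_r (INR n)); [lra|].
  unfold Rdiv. rewrite Rmult_assoc, Rinv_l by lra. rewrite Rmult_1_r.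
  assert (E1 : eps * (INR K + 1) * INR n >= 2 * INR n) by nra.
  nra.
Qed.

Theorem lemma2p2 : forall eps : R, 0 < eps ->
  exists (a : nat -> bool) (N : nat -> nat),
    Rbar_le (Finite (1 - eps)) (LimInf_seq (avg a)) /\
    (forall m j : nat, (1 <= m)%nat -> (1 <= j)%nat -> has_zero_run a j (N m) m).
Proof.
  intros eps He.
  set (K := Z.to_nat (up (2 / eps))).
  assert (HK : 2 <= eps * INR (K + 1)).
  { destruct (archimed (2 / eps)) as [H1 _].
    assert (Hp : 0 < 2 / eps) by (apply Rdiv_lt_0_compat; lra).
    assert (Hz : (0 <= up (2 / eps))%Z).
    { apply le_IZR. lra. }
    assert (E : INR K = IZR (up (2 / eps))).
    { unfold K. rewrite INR_IZR_INZ. rewrite Z2Nat.id by auto. reflexivity. }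
    rewrite plus_INR, E. simpl INR.
    assert (2 < eps * IZR (up (2 / eps))).
    { apply (Rmult_lt_compat_l eps) in H1; auto.
      replace (eps * (2 / eps)) with 2 in H1 by (field; lra). lra. }
    lra. }
  exists (a K), (fun m => (2 * L K m)%nat). split.
  - rewrite <- (LimInf_seq_const (1 - eps)). apply LimInf_le.
    exists 1%nat. intros n Hn. apply avg_bound; auto.
  - intros m j Hm Hj. unfold has_zero_run.
    destruct (window K m j Hm) as [k [H1 [H2 H3]]].
    exists k. split; auto.
Qed.
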